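(* Let $X$ be a separated metric compact Hausdorff space. A reflexive binary continuous submetric $\gamma$ on $X$ is transitive if and only if for all $x,y\in X$ and $i\in\{0,1\}$, $$\gamma((x,i),(y,1-i))=\inf_{z\in X}\big(\gamma((x,i),(z,1-i))+\gamma((z,i),(y,1-i))\big).$$
   Context: A metric on a set $X$ is a map $d\colon X\times X\to[0,\infty]$ with $d(x,x)=0$ and $d(x,z)\le d(x,y)+d(y,z)$ (not necessarily symmetric, $\infty$ allowed); separated means $d(x,y)=0=d(y,x)$ implies $x=y$. A separated metric compact Hausdorff space is a compact Hausdorff space with a separated metric continuous $X\times X\to[0,\infty]$ for the upper topology on $[0,\infty]$ (open sets $]u,\infty]$); $\mathbf{MetCH_{sep}}$ is the category of these with continuous non-expansive maps. $X+X$ is the coproduct with elements $(x,i)$, $i\in\{0,1\}$, coproduct topology and metric $d((x,i),(y,i))=d(x,y)$, $d((x,i),(y,1-i))=\infty$. A binary continuous submetric on $X$ is a (not necessarily separated) metric $\gamma$ on $X+X$, continuous for the upper topology, below the coproduct metric. Its associated corelation is $\binom{q_0}{q_1}\colon X+X\to S:=(X+X)/{\sim_\gamma}$ where $u\sim_\gamma v$ iff $\gamma(u,v)=\gamma(v,u)=0$, $S$ has quotient topology and metric $([u],[v])\mapsto\gamma(u,v)$, $q_i(x)=[(x,i)]$. $\gamma$ is reflexive if there is a morphism $e\colon S\to X$ with $e q_0=e q_1=1_X$. $\gamma$ is transitive if, with $\lambda_0,\lambda_1\colon S\to P$ the pushout in $\mathbf{MetCH_{sep}}$ of $q_1$ and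 $q_0$ (so $\lambda_0\circ q_1=\lambda_1\circ q_0$), there is a morphism $t\colon S\to P$ with $t\circ q_0=\lambda_0\circ q_0$ and $t\circ q_1=\lambda_1\circ q_1$. *)

(* Defs.v *)
From HB Require Import structures.
From mathcomp Require Import all_boot all_order all_algebra generic_quotient.
From mathcomp Require Import all_classical all_reals ereal topology.
Set Implicit Arguments. Unset Strict Implicit. Unset Printing Implicit Defensive.
Import Order.TTheory GRing.Theory Num.Theory.
Local Open Scope classical_set_scope.
Local Open Scope ring_scope.
Local Open Scope ereal_scope.

Section Defs.
Variable R : realType.

(* A (not necessarily symmetric, not necessarily separated) metric with values
   in [0, +oo] (represented in \bar R, nonnegativity required). *)
Definition is_metric (T : Type) (d : T -> T -> \bar R) : Prop :=
  [/\ (forall x y, 0 <= d x y),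
      (forall x, d x x = 0) &
      (forall x y z, d x z <= d x y + d y z)].

Definition separated (T : Type) (d : T -> T -> \bar R) : Prop :=
  forall x y, d x y = 0 -> d y x = 0 -> x = y.

(* Continuity of d : T x T -> [0,+oo] when [0,+oo] carries the upper topology,
   whose open sets are ]u,+oo] (and the whole space). *)
Definition upper_continuous (T : topologicalType) (d : T -> T -> \bar R) : Prop :=
  forall u : \bar R, open [set p : T * T | u < d p.1 p.2].

Record metCH := MetCH {
  mcT :> topologicalType;
  mcd : mcT -> mcT -> \bar R;
  mc_compact : compact [set: mcT];
  mc_hausdorff : hausdorff_space mcT;
  mc_metric : is_metric mcd;
  mc_sep : separated mcd;
  mc_cont : upper_continuous mcd }.

Definition is_hom (A B : topologicalType) (dA : A -> A -> \bar R)
  (dB : B -> B -> \bar R) (f : A -> B) : Prop :=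
  continuous f /\ forall a b, dB (f a) (f b) <= dA a b.

(* The coproduct X + X, with (x,i) := existT _ i x, i : bool (false = 0, true = 1),
   carrying the coproduct (sigma) topology. *)
Definition cfam (X : topologicalType) : bool -> topologicalType := fun _ => X.
Definition XX (X : topologicalType) : topologicalType := {i : bool & cfam X i}.
Definition cinj (X : topologicalType) (i : bool) (x : X) : XX X := existT (cfam X) i x.

Definition coprod_d (X : metCH) (u v : XX X) : \bar R :=
  if projT1 u == projT1 v then mcd (projT2 u) (projT2 v) else +oo.

Record bsubmetric (X : metCH) := BSubmetric {
  gam :> XX X -> XX X -> \bar R;
  gam_metric : is_metric gam;
  gam_cont : upper_continuous gam;
  gam_below : forall u v, gam u v <= coprod_d u v }.

Section Quotient.
Variables (X : metCH) (g : bsubmetric X).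

Definition gam_rel : rel (XX X) := fun u v => `[< g u v = 0 /\ g v u = 0 >].

Lemma gam_rel_refl : reflexive gam_rel.
Proof.
move=> u; apply/asboolP; have [_ h _] := gam_metric g; by rewrite h.
Qed.

Lemma gam_rel_sym : symmetric gam_rel.
Proof. by move=> u v; apply/asboolP/asboolP => -[]. Qed.

Lemma gam_rel_trans : transitive gam_rel.
Proof.
have [h0 _ ht] := gam_metric g.
have z : forall a b c, g a b = 0 -> g b c = 0 -> g a c = 0.
  move=> a b c ab bc; apply/le_anti; rewrite h0 andbT.
  by have := ht a b c; rewrite ab bc adde0.
move=> v u w /asboolP [uv vu] /asboolP [vw wv]; apply/asboolP; split.
  exact: (z _ v).
exact: (z _ v).
Qed.

Canonical gam_equiv := EquivRel gam_rel gam_rel_refl gam_rel_sym gam_rel_trans.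

Definition Sq : topologicalType :=
  quotient_topology {eq_quot gam_equiv}%qT.

Definition piS (u : XX X) : Sq := (\pi_Sq u)%qT.

(* metric on S : ([u],[v]) |-> gamma(u,v) (independent of representatives) *)
Definition dS (a b : Sq) : \bar R := g (repr a) (repr b).

Definition q (i : bool) (x : X) : Sq := piS (cinj i x).

End Quotient.

Definition is_pushout (X S : topologicalType) (dX : X -> X -> \bar R)
  (dSS : S -> S -> \bar R) (f h : X -> S) (P : metCH) (l0 l1 : S -> P) : Prop :=
  [/\ is_hom dSS (@mcd P) l0, is_hom dSS (@mcd P) l1, l0 \o f = l1 \o h &
   forall (Q : metCH) (m0 m1 : S -> Q),
     is_hom dSS (@mcd Q) m0 -> is_hom dSS (@mcd Q) m1 -> m0 \o f = m1 \o h ->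
     exists! k : P -> Q, [/\ is_hom (@mcd P) (@mcd Q) k, k \o l0 = m0 & k \o l1 = m1]].

Definition reflexive_sub (X : metCH) (g : bsubmetric X) : Prop :=
  exists e : Sq g -> X, [/\ is_hom (@dS X g) (@mcd X) e, e \o q g false = id
                                                         & e \o q g true = id].

Definition transitive_sub (X : metCH) (g : bsubmetric X) : Prop :=
  forall (P : metCH) (l0 l1 : Sq g -> P),
    is_pushout (@mcd X) (@dS X g) (q g true) (q g false) l0 l1 ->
    exists t : Sq g -> P, [/\ is_hom (@dS X g) (@mcd P) t,
                              t \o q g false = l0 \o q g false &
                              t \o q g true = l1 \o q g true].

End Defs.

(* Main.v *)
Require Import Defs.
From HB Require Import structures.
From mathcomp Require Import all_boot all_order all_algebra generic_quotient.
From mathcomp Require Import all_classical all_reals ereal topology.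
From mathcomp Require Import ring lra.
Import Order.TTheory GRing.Theory Num.Theory.
Local Open Scope classical_set_scope.
Local Open Scope ring_scope.
Local Open Scope ereal_scope.

Lemma open_from_nbhs {T : topologicalType} (S : set T) :
  (forall x, S x -> nbhs x S) -> open S.
Proof. by move=> H; rewrite openE. Qed.

Lemma onbhs {T : topologicalType} {A : set T} {x : T} : open A -> A x -> nbhs x A.
Proof. by move=> oA Ax; apply: open_nbhs_nbhs; split. Qed.

Lemma tube_gen {T : topologicalType} (K : set T) (I : Type) (F : set_system I)
  (Q : I -> T -> Prop) :
  compact K -> Filter F ->
  (forall x, K x -> \forall x' \near x & i \near F, Q i x') ->
  \forall i \near F, exists U, [/\ open U, K `<=` U & U `<=` Q i].
Proof.
move=> cK FF H.
have : \forall i \near F, K `<=` (fun x => exists A, [/\ open A, A x & A `<=` Q i]).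
  apply: (proj1 (compact_near_coveringP K) cK) => x Kx.
  have [[B1 B2] [/= nB1 FB2] sub] := H x Kx.
  move: nB1; rewrite nbhsE => -[A [oA Ax] AB1].
  exists (A, B2); first by split => //; apply: open_nbhs_nbhs.
  move=> [x' i] [/= Ax' B2i]; exists A; split => // y Ay.
  by apply: (sub (y, i)); split => //=; exact: AB1.
move=> H1; apply: filterS H1 => i KP; exists [set x | exists A, [/\ open A, A x & A `<=` Q i]]; split.
- apply: open_from_nbhs => x [A [oA Ax AQ]].
  have nA : nbhs x A by apply: open_nbhs_nbhs.
  by apply: filterS nA => y Ay; exists A; split.
- exact: KP.
- by move=> x [A [_ Ax AQ]]; apply: AQ.
Qed.

Definition Pw {Y : Type} (F : set_system Y) : set_system (set Y) :=
  filter_from F (fun V => [set i | i `<=` V]).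

Lemma Pw_filter {Y : Type} (F : set_system Y) : Filter F -> Filter (Pw F).
Proof.
move=> FF; apply: filter_from_filter; first by exists setT; exact: filterT.
move=> A B FA FB; exists (A `&` B); first exact: filterI.
by move=> i /= iAB; split => x /iAB [].
Qed.

Definition NK {T : topologicalType} (K : set T) : set_system T :=
  filter_from [set U | open U /\ K `<=` U] id.

Lemma NK_filter {T : topologicalType} (K : set T) : Filter (NK K).
Proof.
apply: filter_from_filter; first by exists setT; split => //; exact: openT.
move=> A B [oA KA] [oB KB]; exists (A `&` B) => //; split; first exact: openI.
by move=> x Kx; split; [apply: KA | apply: KB].
Qed.

Lemma tube2 {T U : topologicalType} (K : set T) (L : set U) (W : set (T * U)) :
  compact K -> compact L -> open W -> K `*` L `<=` W ->
  exists A B, [/\ open A, open B, K `<=` A, L `<=` B & A `*` B `<=` W].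
Proof.
move=> cK cL oW KLW.
have step1 : forall x, K x -> exists A B,
    [/\ nbhs x A, open B, L `<=` B & A `*` B `<=` W].
  move=> x Kx.
  have PF : Filter (Pw (nbhs x)) by apply: Pw_filter.
  have := @tube_gen U L (set T) (Pw (nbhs x))
     (fun i y => forall x', i x' -> W (x', y)) cL PF.
  case.
    move=> y Ly.
    have nW : nbhs (x, y) W by apply: onbhs => //; exact: KLW.
    have nW' : filter_prod (nbhs x) (nbhs y) W := nW.
    have [[A0 B0] [/= nA0 nB0] sub] := nW'.
    exists (B0, [set i | i `<=` A0]); first by split => //=; exists A0.
    move=> [y' i] [/= B0y' iA0] x' ix'.
    by apply: (sub (x', y')); split => //=; exact: iA0.
  move=> A nA HA; have [V [oV LV VQ]] := HA A (fun z Az => Az).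
  exists A, V; split => // -[x' y'] [/= Ax' Vy'].
  by apply: (VQ y'); first exact: Vy'.
have PF : Filter (Pw (NK L)) by apply: Pw_filter; exact: NK_filter.
have := @tube_gen T K (set U) (Pw (NK L))
   (fun i x => forall y, i y -> W (x, y)) cK PF.
case.
  move=> x Kx; have [A [B [nA oB LB AB]]] := step1 x Kx.
  exists (A, [set i | i `<=` B]); first by split => //=; exists B => //; exists B.
  move=> [x' i] [/= Ax' iB] y iy.
  by apply: (AB (x', y)); split => //=; exact: iB.
move=> B' [V [oV LV] VB'] HB'.
have [U0 [oU KU UQ]] := HB' V VB'.
exists U0, V; split => // -[x y] [/= Ux Vy]; exact: (UQ x Ux y Vy).
Qed.

Lemma saturate_open {T : topologicalType} (E : T -> T -> Prop) (U : set T) :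
  compact [set: T] -> open [set p : T * T | ~ E p.1 p.2] -> open U ->
  open [set x | forall y, E x y -> U y].
Proof.
move=> cT oE oU; apply: open_from_nbhs => x Hx.
have key : \forall x1 \near x, [set: T] `<=` (fun y => E x1 y -> U y).
  apply: (proj1 (compact_near_coveringP [set: T]) cT) => y _.
  have [Uy|nUy] := pselect (U y).
    exists (U, setT); first by split => //=; [exact: onbhs | exact: filterT].
    by move=> [y' x1] [/= Uy' _].
  have nE : ~ E x y by move=> /Hx.
  have nW : nbhs (x, y) [set p : T * T | ~ E p.1 p.2] by exact: onbhs.
  have nW' : filter_prod (nbhs x) (nbhs y) [set p : T * T | ~ E p.1 p.2] := nW.
  have [[A B] [/= nA nB] sub] := nW'.
  exists (B, A); first by split.
  move=> [y' x1] [/= By' Ax1] Ex1y'; exfalso.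
  by apply: (sub (x1, y')).
by apply: filterS key => x1 Hx1 y Ey; exact: (Hx1 y I Ey).
Qed.

Lemma open_slice_r {T U : topologicalType} (O : set (T * U)) (x : T) :
  open O -> open [set y | O (x, y)].
Proof.
move=> oO; apply: open_from_nbhs => y Oxy.
have nO : nbhs (x, y) O by exact: (onbhs oO Oxy).
have : filter_prod (nbhs x) (nbhs y) O := nO.
move=> [[A B] [/= nA nB] sub]; apply: filterS nB => y' By'.
apply: (sub (x, y')); split => //=; exact: nbhs_singleton.
Qed.

Section Haus.
Variable R : realType.
Lemma metric_hausdorff (S : topologicalType) (f : S -> S -> \bar R) :
  is_metric f -> Defs.separated f -> upper_continuous f -> hausdorff_space S.
Proof.
move=> [f0 ff _] sf cf p q clpq.
apply: contrapT => npq.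
have oW : open [set x : S * S | 0 < f x.1 x.2] := cf 0.
have [h1|h2] : 0 < f p q \/ 0 < f q p.
  have [e1|e1] := eqVneq (f p q) 0; last by left; rewrite lt0e e1 f0.
  have [e2|e2] := eqVneq (f q p) 0; last by right; rewrite lt0e e2 f0.
  by exfalso; apply: npq; apply: sf.
- have nW := @onbhs _ _ (p,q) oW h1.
  have : filter_prod (nbhs p) (nbhs q) [set x : S * S | 0 < f x.1 x.2] := nW.
  move=> [[A B] [/= nA nB] sub].
  have [z [Az Bz]] := clpq A B nA nB.
  have := sub (z, z) (conj Az Bz); by rewrite /= ff ltxx.
- have nW := @onbhs _ _ (q,p) oW h2.
  have : filter_prod (nbhs q) (nbhs p) [set x : S * S | 0 < f x.1 x.2] := nW.
  move=> [[B A] [/= nB nA] sub].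
  have [z [Az Bz]] := clpq A B nA nB.
  have := sub (z, z) (conj Bz Az); by rewrite /= ff ltxx.
Qed.
End Haus.

Section MQ.
Variable R : realType.
Variable T : topologicalType.
Variable d : T -> T -> \bar R.
Hypothesis dm : is_metric d.

Definition zr : rel T := fun s t => `[< d s t = 0 /\ d t s = 0 >].

Lemma zr_refl : reflexive zr.
Proof. move=> u; apply/asboolP; have [_ h _] := dm; by rewrite h. Qed.

Lemma zr_sym : symmetric zr.
Proof. by move=> u v; apply/asboolP/asboolP => -[]. Qed.

Lemma zr_trans : transitive zr.
Proof.
have [h0 _ ht] := dm.
have z : forall a b c, d a b = 0 -> d b c = 0 -> d a c = 0.
  move=> a b c ab bc; apply/le_anti; rewrite h0 andbT.
  by have := ht a b c; rewrite ab bc adde0.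
move=> v u w /asboolP [uv vu] /asboolP [vw wv]; apply/asboolP; split.
  exact: (z _ v).
exact: (z _ v).
Qed.

Canonical zequiv := EquivRel zr zr_refl zr_sym zr_trans.

Definition QT : topologicalType := quotient_topology {eq_quot zequiv}%qT.
Definition piQ (s : T) : QT := (\pi_QT s)%qT.
Definition dq (a b : QT) : \bar R := d (repr a) (repr b).

Lemma zr_dl s s' t : zr s s' -> d s t = d s' t.
Proof.
have [h0 _ ht] := dm.
move=> /asboolP [e1 e2]; apply/le_anti; apply/andP; split.
  by have := ht s s' t; rewrite e1 add0e.
by have := ht s' s t; rewrite e2 add0e.
Qed.

Lemma zr_dr s s' t : zr s s' -> d t s = d t s'.
Proof.
have [h0 _ ht] := dm.
move=> /asboolP [e1 e2]; apply/le_anti; apply/andP; split.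
  by have := ht t s' s; rewrite e2 adde0.
by have := ht t s s'; rewrite e1 adde0.
Qed.

Lemma piQ_eqP s t : piQ s = piQ t <-> zr s t.
Proof.
case: (eqmodP zequiv s t) => h.
  by split => // _; exact: h.
by split => // e; exfalso; apply: h; exact: e.
Qed.

Lemma repr_piQ s : zr (repr (piQ s)) s.
Proof. by apply/piQ_eqP; rewrite /piQ reprK. Qed.

Lemma piQ_repr (a : QT) : piQ (repr a) = a.
Proof. exact: reprK. Qed.

Lemma dq_pi s t : dq (piQ s) (piQ t) = d s t.
Proof.
rewrite /dq (zr_dl _ _ _ (repr_piQ s)); exact: (zr_dr _ _ _ (repr_piQ t)).
Qed.

Lemma dq_metric : is_metric dq.
Proof.
have [h0 h1 ht] := dm; split => [a b|a|a b c]; rewrite /dq //; exact: ht.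
Qed.

Lemma dq_sep : Defs.separated dq.
Proof.
move=> a b e1 e2; rewrite -(piQ_repr a) -(piQ_repr b); apply/piQ_eqP.
by apply/asboolP; split.
Qed.

Lemma piQ_continuous : continuous piQ.
Proof. exact: pi_continuous. Qed.

Lemma QT_compact : compact [set: T] -> compact [set: QT].
Proof.
move=> cT.
have -> : [set: QT] = piQ @` [set: T].
  apply/funext => a; apply/propext; split => // _; exists (repr a) => //.
  exact: piQ_repr.
apply: continuous_compact => //; apply: continuous_subspaceT.
exact: piQ_continuous.
Qed.

Lemma QT_open (A : set QT) : open (piQ @^-1` A) -> open A.
Proof. by []. Qed.


Lemma zr_compl_open : upper_continuous d ->
  open [set p : T * T | ~ zr p.1 p.2].
Proof.
move=> cd; have [h0 _ _] := dm.
have -> : [set p : T * T | ~ zr p.1 p.2] =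
    [set p : T * T | 0 < d p.1 p.2] `|` (unstable.swap @^-1` [set p : T * T | 0 < d p.1 p.2]).
  apply/funext => -[s t]; apply/propext; rewrite /=; split.
    move=> nz; have [e1|e1] := eqVneq (d s t) 0; last by left; rewrite lt0e e1 h0.
    have [e2|e2] := eqVneq (d t s) 0; last by right; rewrite /= lt0e e2 h0.
    by exfalso; apply: nz; apply/asboolP; split.
  move=> + /asboolP [e1 e2]; rewrite /= e1 e2 ltxx; by case.
apply: openU; first exact: cd.
have := proj1 (continuousP (@unstable.swap T T)) (@swap_continuous T T) _ (cd 0).
by [].
Qed.

Lemma class_compact (a0 : T) : compact [set: T] -> upper_continuous d ->
  compact [set s | zr s a0].
Proof.
move=> cT cd; apply: (subclosed_compact _ cT) => //.
rewrite -openC.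
have -> : ~` [set s | zr s a0] = [set s | ~ zr a0 s].
  by apply/funext => s; apply/propext; rewrite /= zr_sym.
exact: (open_slice_r _ a0 (zr_compl_open cd)).
Qed.

Lemma dq_cont : compact [set: T] -> upper_continuous d -> upper_continuous dq.
Proof.
move=> cT cd u; apply: open_from_nbhs => -[a b] /= H.
set a0 := repr a; set b0 := repr b.
have oW : open [set p : T * T | u < d p.1 p.2] := cd u.
have sub : [set s | zr s a0] `*` [set s | zr s b0] `<=` [set p : T * T | u < d p.1 p.2].
  move=> [s t] [/= sa tb]; rewrite (zr_dl _ _ _ sa) (zr_dr _ _ _ tb); exact: H.
have [U0 [V0 [oU oV CU CV UV]]] :=
  tube2 _ _ _ (class_compact a0 cT cd) (class_compact b0 cT cd) oW sub.
have oE := zr_compl_open cd.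
have oUs := saturate_open (fun s t => zr s t) U0 cT oE oU.
have oVs := saturate_open (fun s t => zr s t) V0 cT oE oV.
set Us := [set x | forall y, zr x y -> U0 y] in oUs.
set Vs := [set x | forall y, zr x y -> V0 y] in oVs.
have satU : forall s, Us (repr (piQ s)) <-> Us s.
  move=> s; have r := repr_piQ s; split => h y e; apply: h.
    exact: zr_trans r e.
  by rewrite zr_sym in r; exact: zr_trans r e.
have satV : forall s, Vs (repr (piQ s)) <-> Vs s.
  move=> s; have r := repr_piQ s; split => h y e; apply: h.
    exact: zr_trans r e.
  by rewrite zr_sym in r; exact: zr_trans r e.
have oA : open [set a' : QT | Us (repr a')].
  apply: QT_open.
  have -> : piQ @^-1` [set a' : QT | Us (repr a')] = Us.
    by apply/funext => s; apply/propext; exact: satU.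
  exact: oUs.
have oB : open [set b' : QT | Vs (repr b')].
  apply: QT_open.
  have -> : piQ @^-1` [set b' : QT | Vs (repr b')] = Vs.
    by apply/funext => s; apply/propext; exact: satV.
  exact: oVs.
have Aa : Us (repr a) by move=> y e; apply: CU; rewrite /= zr_sym.
have Bb : Vs (repr b) by move=> y e; apply: CV; rewrite /= zr_sym.
have nA := @onbhs _ _ a oA Aa.
have nB := @onbhs _ _ b oB Bb.
exists ([set a' : QT | Us (repr a')], [set b' : QT | Vs (repr b')]).
  by split.
move=> [a' b'] [/= Ua' Vb'].
apply: (UV (repr a', repr b')); split.
  by apply: Ua'; exact: zr_refl.
by apply: Vb'; exact: zr_refl.
Qed.

Lemma QT_hausdorff : compact [set: T] -> upper_continuous d -> hausdorff_space QT.
Proof.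
move=> cT cd; apply: (@metric_hausdorff R QT dq).
- exact: dq_metric.
- exact: dq_sep.
- exact: dq_cont.
Qed.

Definition mkMet (cT : compact [set: T]) (cd : upper_continuous d) : metCH R :=
  @MetCH R QT dq (QT_compact cT) (QT_hausdorff cT cd) dq_metric dq_sep (dq_cont cT cd).

End MQ.

Section Ere.
Variable R : realType.
Variable Z : Type.

Lemma xinf_ge0 (h : Z -> \bar R) : (forall z, 0 <= h z) -> 0 <= ereal_inf (h @` setT).
Proof. by move=> H; apply/ereal_infP => _ [z _ <-]. Qed.

Lemma xinf_le (h : Z -> \bar R) z : ereal_inf (h @` setT) <= h z.
Proof. by apply: ge_ereal_inf; exists (h z) => //; exists z. Qed.

Lemma xinf_le_addl (f h : Z -> \bar R) (a : \bar R) :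
  0 <= a -> (forall z, 0 <= h z) -> (forall z, f z <= a + h z) ->
  ereal_inf (f @` setT) <= a + ereal_inf (h @` setT).
Proof.
move=> a0 h0 H; case: a a0 H => [r| |] //= a0 H.
- rewrite -leeBlDl //; apply/ereal_infP => _ [z _ <-].
  rewrite leeBlDl //; apply: le_trans (H z); exact: xinf_le.
- by rewrite addye ?leey // gt_eqF // (lt_le_trans _ (xinf_ge0 _ h0)) // ltNy0.
Qed.

Lemma xle_add_inf (h : Z -> \bar R) (a c : \bar R) :
  0 <= a -> (forall z, 0 <= h z) -> (forall z, c <= a + h z) ->
  c <= a + ereal_inf (h @` setT).
Proof.
move=> a0 h0 H; case: a a0 H => [r| |] //= a0 H.
- rewrite -leeBlDl //; apply/ereal_infP => _ [z _ <-].
  by rewrite leeBlDl.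
- by rewrite addye ?leey // gt_eqF // (lt_le_trans _ (xinf_ge0 _ h0)) // ltNy0.
Qed.

Lemma xlt_add_split (a b c : \bar R) : 0 <= a -> 0 <= b -> c < a + b ->
  exists c1 c2, [/\ c1 < a, c2 < b &
    forall a' b', 0 <= a' -> 0 <= b' -> c1 < a' -> c2 < b' -> c < a' + b'].
Proof.
move=> a0 b0 cab.
have [c0|c0] := ltP c 0.
  exists -oo, -oo; split; [by rewrite (lt_le_trans _ a0) ?ltNy0|
     by rewrite (lt_le_trans _ b0) ?ltNy0|].
  by move=> a' b' a'0 b'0 _ _; apply: (lt_le_trans c0); exact: adde_ge0.
case: a a0 cab => [r| |] // a0 cab.
- case: b b0 cab => [s| |] // b0 cab.
  + case: c c0 cab => [t| |] // c0 cab.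
    have e : ((r + s - t) / 2 > 0)%R.
      by apply: divr_gt0 => //; rewrite subr_gt0 -lte_fin EFinD.
    exists (r - (r + s - t) / 2)%:E, (s - (r + s - t) / 2)%:E; split.
    * by rewrite lte_fin ltrBlDr ltrDl.
    * by rewrite lte_fin ltrBlDr ltrDl.
    * move=> a' b' _ _ h1 h2.
      have : ((r - (r + s - t) / 2)%:E + (s - (r + s - t) / 2)%:E) < a' + b'.
        exact: lteD.
      apply: le_lt_trans; rewrite -EFinD lee_fin.
      by rewrite le_eqVlt; apply/orP; left; apply/eqP; field.
  + have cy : c < +oo by move: cab; rewrite addey.
    exists -oo, c; split => //; first exact: ltNyr.
    move=> a' b' a'0 _ _ h2; apply: (lt_le_trans h2); rewrite leeDr //.
- have cy : c < +oo by move: cab; rewrite addye // gt_eqF // (lt_le_trans _ b0) ?ltNy0.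
  exists c, -oo; split => //; first by rewrite (lt_le_trans _ b0) ?ltNy0.
  move=> a' b' _ b'0 h1 _; apply: (lt_le_trans h1); rewrite leeDl //.
Qed.


Lemma xereal_dense (u v : \bar R) : u < v -> exists r : R, u < r%:E /\ r%:E < v.
Proof.
case: u => [r| |]; case: v => [s| |] //= h.
- exists ((r + s) / 2)%R; rewrite !lte_fin in h *; split; lra.
- by exists (r + 1)%R; rewrite lte_fin ltey; split => //; lra.
- by exists (s - 1)%R; rewrite lte_fin ltNye; split => //; lra.
- by exists 0%R; split; [exact: ltNyr | exact: ltry].
Qed.

End Ere.

Lemma fst_cont {T U : topologicalType} : continuous (@fst T U).
Proof. by move=> p; apply: cvg_fst. Qed.
Lemma snd_cont {T U : topologicalType} : continuous (@snd T U).
Proof. by move=> p; apply: cvg_snd. Qed.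
Lemma pair_cont {S T U : topologicalType} (f : S -> T) (h : S -> U) :
  continuous f -> continuous h -> continuous (fun x => (f x, h x)).
Proof. by move=> cf ch x; apply: cvg_pair; [exact: cf | exact: ch]. Qed.
Lemma comp_cont {S T U : topologicalType} (f : S -> T) (h : T -> U) :
  continuous f -> continuous h -> continuous (h \o f).
Proof. by move=> cf ch x; apply: continuous_comp; [exact: cf | exact: ch]. Qed.

Section Lsc.
Variable R : realType.

Definition lsc {T : topologicalType} (f : T -> \bar R) := forall u, open [set x | u < f x].

Lemma lsc_add {T : topologicalType} (f h : T -> \bar R) :
  (forall x, 0 <= f x) -> (forall x, 0 <= h x) -> lsc f -> lsc h ->
  lsc (fun x => f x + h x).
Proof.
move=> f0 h0 lf lh u; apply: open_from_nbhs => x /= H.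
have [c1 [c2 [c1f c2h Hc]]] := xlt_add_split _ _ _ _ (f0 x) (h0 x) H.
have n1 := @onbhs _ _ x (lf c1) c1f.
have n2 := @onbhs _ _ x (lh c2) c2h.
by apply: filterS (filterI n1 n2) => y [/= h1 h2]; apply: Hc.
Qed.

Lemma lsc_comp {T U : topologicalType} (phi : T -> U) (f : U -> \bar R) :
  continuous phi -> lsc f -> lsc (f \o phi).
Proof. by move=> cphi lf u; have := proj1 (continuousP phi) cphi _ (lf u). Qed.

Lemma lsc_inf {T K : topologicalType} (G : T -> K -> \bar R) :
  compact [set: K] -> lsc (fun p : T * K => G p.1 p.2) ->
  lsc (fun x => ereal_inf (G x @` setT)).
Proof.
move=> cK lG u; apply: open_from_nbhs => x /= H.
have [r [ur rinf]] := xereal_dense _ _ _ H.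
have key : \forall y \near x, [set: K] `<=` (fun z => r%:E < G y z).
  apply: (proj1 (compact_near_coveringP _) cK) => z _.
  have hz : r%:E < G x z by apply: (lt_le_trans rinf); exact: xinf_le.
  have nW := @onbhs _ _ (x, z) (lG r%:E) hz.
  have : filter_prod (nbhs x) (nbhs z) [set p : T * K | r%:E < G p.1 p.2] := nW.
  move=> [[A B] [/= nA nB] sub].
  exists (B, A); first by split.
  by move=> [z' y] [/= Bz' Ay]; apply: (sub (y, z')).
apply: filterS key => y Hy; apply: (lt_le_trans ur).
by apply/ereal_infP => _ [z _ <-]; apply/ltW; exact: Hy.
Qed.

End Lsc.

Section Main.
Variable R : realType.
Variable X : metCH R.
Variable g : bsubmetric X.

Lemma g_ge0 u v : 0 <= g u v.
Proof. by have [h _ _] := gam_metric g. Qed.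
Lemma g_00 u : g u u = 0.
Proof. by have [_ h _] := gam_metric g. Qed.
Lemma g_tri u v w : g u w <= g u v + g v w.
Proof. by have [_ _ h] := gam_metric g. Qed.

Lemma dX_ge0 (x y : X) : 0 <= mcd x y.
Proof. by have [h _ _] := mc_metric X. Qed.
Lemma dX_tri (x y z : X) : mcd x z <= mcd x y + mcd y z.
Proof. by have [_ _ h] := mc_metric X. Qed.

Lemma piS_eqP u v : piS g u = piS g v <-> gam_rel g u v.
Proof.
case: (eqmodP (gam_equiv g) u v) => h.
  by split => // _; exact: h.
by split => // e; exfalso; apply: h; exact: e.
Qed.

Lemma repr_piS u : gam_rel g (repr (piS g u)) u.
Proof. by apply/piS_eqP; rewrite /piS reprK. Qed.

Lemma g_invl u u' v : gam_rel g u u' -> g u v = g u' v.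
Proof. exact: (zr_dl R (XX X) g (gam_metric g) u u' v). Qed.
Lemma g_invr u u' v : gam_rel g u u' -> g v u = g v u'.
Proof. exact: (zr_dr R (XX X) g (gam_metric g) u u' v). Qed.

Lemma dS_pi u v : dS (piS g u) (piS g v) = g u v.
Proof.
rewrite /dS (g_invl _ _ _ (repr_piS u)); exact: (g_invr _ _ _ (repr_piS v)).
Qed.

Lemma dS_q b b' x y : dS (q g b x) (q g b' y) = g (cinj b x) (cinj b' y).
Proof. exact: dS_pi. Qed.

Lemma g_below_same b (x y : X) : g (cinj b x) (cinj b y) <= mcd x y.
Proof. by have := gam_below g (cinj b x) (cinj b y); rewrite /coprod_d /= eqxx. Qed.

Lemma refl_le : reflexive_sub g ->
  forall b b' (x y : X), mcd x y <= g (cinj b x) (cinj b' y).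
Proof.
move=> [e [[_ he] e0 e1]] b b' x y.
have E : forall b (x : X), e (q g b x) = x.
  by case=> z; [have := congr1 (fun f => f z) e1 | have := congr1 (fun f => f z) e0].
by have := he (q g b x) (q g b' y); rewrite !E dS_q.
Qed.

Lemma q_continuous b : continuous (q g b).
Proof.
move=> x; apply: (@continuous_comp _ _ _ (cinj b) (piS g)).
  exact: existT_continuous.
exact: pi_continuous.
Qed.

Lemma formula_transitive :
  (forall (x y : X) (i : bool),
     g (cinj i x) (cinj (~~ i) y) =
     ereal_inf ((fun z : X => g (cinj i x) (cinj (~~ i) z) + g (cinj i z) (cinj (~~ i) y)) @` [set: X])) ->
  transitive_sub g.
Proof.
move=> H P l0 l1 [[cl0 hl0] [cl1 hl1] comm _].
have dP_tri : forall a b c : P, mcd a c <= mcd a b + mcd b c.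
  by have [_ _ h] := mc_metric P.
have dP_ge0 : forall a b : P, 0 <= mcd a b.
  by have [h _ _] := mc_metric P.
have comm' : forall z, l0 (q g true z) = l1 (q g false z).
  by move=> z; have := congr1 (fun f => f z) comm.
pose f := unstable.sigT_fun (fun b (x : cfam X b) =>
   if b then l1 (q g true x) else l0 (q g false x)).
have fne : forall u v, mcd (f u) (f v) <= g u v.
  move=> [[|] x] [[|] y]; rewrite /f /unstable.sigT_fun /=.
  - by have := hl1 (q g true x) (q g true y); rewrite dS_q.
  - rewrite (H x y true); apply/ereal_infP => _ [z _ <-] /=.
    apply: le_trans (dP_tri _ (l1 (q g false z)) _) _.
    apply: leeD; first by have := hl1 (q g true x) (q g false z); rewrite dS_q.
    by rewrite -comm'; have := hl0 (q g true z) (q g false y); rewrite dS_q.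
  - rewrite (H x y false); apply/ereal_infP => _ [z _ <-] /=.
    apply: le_trans (dP_tri _ (l0 (q g true z)) _) _.
    apply: leeD; first by have := hl0 (q g false x) (q g true z); rewrite dS_q.
    by rewrite comm'; have := hl1 (q g false z) (q g true y); rewrite dS_q.
  - by have := hl0 (q g false x) (q g false y); rewrite dS_q.
have fhomo : forall u v, gam_rel g u v -> f u = f v.
  move=> u v /asboolP [e1 e2]; apply: (mc_sep (m := P)).
    by apply/le_anti; rewrite dP_ge0 andbT -e1; exact: fne.
  by apply/le_anti; rewrite dP_ge0 andbT -e2; exact: fne.
have fcont : continuous f.
  apply: sigT_continuous => b; case: b => /=.
    by move=> x; apply: continuous_comp; [exact: q_continuous | exact: cl1].
  by move=> x; apply: continuous_comp; [exact: q_continuous | exact: cl0].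
have frepr : forall u, f (repr (piS g u)) = f u.
  by move=> u; apply: fhomo; exact: repr_piS.
exists (f \o repr); split.
- split.
    apply: repr_comp_continuous => // u v /eqP e; apply/eqP.
    by apply: fhomo; apply/piS_eqP; exact: e.
  by move=> a b; rewrite /dS /=; exact: fne.
- by apply/funext => x /=; rewrite frepr.
- by apply/funext => x /=; rewrite frepr.
Qed.

End Main.

Section Push.
Variable R : realType.
Variable X : metCH R.
Variable g : bsubmetric X.
Hypothesis refl : reflexive_sub g.

Definition cr (c : bool) (u v : XX X) : \bar R :=
  ereal_inf ((fun z : X => g u (cinj c z) + g (cinj (~~ c) z) v) @` setT).

Definition dYb (b b' : bool) (u v : XX X) : \bar R :=
  if b == b' then g u v else cr (~~ b) u v.

Definition YY : topologicalType := {b : bool & cfam (XX X) b}.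

Definition dY (p p' : YY) : \bar R := dYb (projT1 p) (projT1 p') (projT2 p) (projT2 p').

Lemma cr_ge0 c u v : 0 <= cr c u v.
Proof. by apply: xinf_ge0 => z; apply: adde_ge0; exact: g_ge0. Qed.

Lemma swap_le c (z w : X) : g (cinj c z) (cinj c w) <= g (cinj (~~ c) z) (cinj (~~ c) w).
Proof. apply: le_trans (g_below_same R X g c z w) _; exact: refl_le. Qed.

Lemma crL1 c u v w : cr c u w <= g u v + cr c v w.
Proof.
apply: xinf_le_addl; [exact: g_ge0 | by move=> z; apply: adde_ge0; exact: g_ge0|].
move=> z; rewrite addeA; apply: leeD => //; exact: g_tri.
Qed.

Lemma crL2 c u v w : cr c u w <= cr c u v + g v w.
Proof.
rewrite addeC; apply: xinf_le_addl; [exact: g_ge0 | by move=> z; apply: adde_ge0; exact: g_ge0|].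
move=> z; rewrite [X in _ <= X]addeC -addeA; apply: leeD => //.
exact: g_tri.
Qed.

Lemma crL3 c u v w : g u w <= cr c u v + cr (~~ c) v w.
Proof.
rewrite addeC; apply: xle_add_inf; [exact: cr_ge0 | by move=> z; apply: adde_ge0; exact: g_ge0|].
move=> z; rewrite addeC; apply: xle_add_inf; [by apply: adde_ge0; exact: g_ge0 | by move=> z'; apply: adde_ge0; exact: g_ge0|].
move=> w'; rewrite negbK.
apply: le_trans (g_tri R X g u (cinj c z) w) _.
rewrite -!addeA; apply: leeD => //.
apply: le_trans (g_tri R X g (cinj c z) (cinj c w') w) _.
rewrite !addeA; apply: leeD => //.
apply: le_trans (swap_le c z w') _; exact: g_tri.
Qed.

Lemma dY_metric : is_metric dY.
Proof.
split.
- move=> [b u] [b' v]; rewrite /dY /dYb /=; case: eqP => _; [exact: g_ge0 | exact: cr_ge0].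
- by move=> [b u]; rewrite /dY /dYb /= eqxx g_00.
- move=> [b1 u] [b2 v] [b3 w]; rewrite /dY /dYb /=.
  case: b1 u => u; case: b2 v => v; case: b3 w => w /=.
  + exact: g_tri.
  + exact: crL1.
  + exact: (crL3 false).
  + exact: crL2.
  + exact: crL2.
  + exact: (crL3 true).
  + exact: crL1.
  + exact: g_tri.
Qed.

Lemma cr_lsc c : lsc R (fun p : XX X * XX X => cr c p.1 p.2).
Proof.
apply: (lsc_inf R (fun p : XX X * XX X => fun z : X => g p.1 (cinj c z) + g (cinj (~~ c) z) p.2)).
  exact: mc_compact.
apply: (lsc_add R (fun s : (XX X * XX X) * X => g s.1.1 (cinj c s.2))
                  (fun s : (XX X * XX X) * X => g (cinj (~~ c) s.2) s.1.2)).
- move=> ?; exact: g_ge0.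
- move=> ?; exact: g_ge0.
- apply: (lsc_comp R (fun s : (XX X * XX X) * X => (s.1.1, cinj c s.2)) (fun q => g q.1 q.2)).
    apply: pair_cont.
      exact: (comp_cont _ _ fst_cont fst_cont).
    exact: (comp_cont _ _ snd_cont (@existT_continuous _ _ c)).
  exact: gam_cont.
- apply: (lsc_comp R (fun s : (XX X * XX X) * X => (cinj (~~ c) s.2, s.1.2)) (fun q => g q.1 q.2)).
    apply: pair_cont.
      exact: (comp_cont _ _ snd_cont (@existT_continuous _ _ (~~ c))).
    exact: (comp_cont _ _ fst_cont snd_cont).
  exact: gam_cont.
Qed.

Lemma dYb_lsc b b' : lsc R (fun p : XX X * XX X => dYb b b' p.1 p.2).
Proof.
rewrite /dYb; case: eqP => _; first exact: gam_cont.
exact: cr_lsc.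
Qed.

Lemma dY_cont : upper_continuous dY.
Proof.
move=> u; apply: open_from_nbhs => -[[b x] [b' y]] /= H.
have oW := dYb_lsc b b' u.
have nW := @onbhs _ _ (x, y) oW H.
have : filter_prod (nbhs x) (nbhs y) [set p : XX X * XX X | u < dYb b b' p.1 p.2] := nW.
move=> [[A B] [/= nA nB] sub].
exists (existT (cfam (XX X)) b @` A, existT (cfam (XX X)) b' @` B).
  by split; [exact: existT_nbhs | exact: existT_nbhs].
move=> [p p'] [/= [x' Ax' <-] [y' By' <-]].
exact: (sub (x', y')).
Qed.

Lemma XX_compact : compact [set: XX X].
Proof.
apply: sigT_compact; first exact: finite_finset.
move=> i; exact: mc_compact.
Qed.

Lemma YY_compact : compact [set: YY].
Proof.
apply: sigT_compact; first exact: finite_finset.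
move=> i; exact: XX_compact.
Qed.


Definition PP : metCH R := mkMet R YY dY dY_metric YY_compact dY_cont.
Definition piY (p : YY) : PP := piQ R YY dY dY_metric p.

Lemma dP_pi s t : mcd (piY s) (piY t) = dY s t.
Proof. exact: (dq_pi R YY dY dY_metric s t). Qed.

Lemma piY_eqP s t : piY s = piY t <-> dY s t = 0 /\ dY t s = 0.
Proof.
split.
  by move=> /(piQ_eqP R YY dY dY_metric) /asboolP.
by move=> h; apply/(piQ_eqP R YY dY dY_metric); apply/asboolP.
Qed.

Definition lP (b : bool) (a : Sq g) : PP := piY (existT (cfam (XX X)) b (repr a)).

Lemma lP_pi b u : lP b (piS g u) = piY (existT (cfam (XX X)) b u).
Proof.
apply/piY_eqP; rewrite /dY /dYb /= eqxx.
by have /asboolP [e1 e2] := repr_piS R X g u.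
Qed.

Lemma lP_hom b : is_hom (@dS R X g) (@mcd R PP) (lP b).
Proof.
split.
  apply/quotient_continuous.
  have -> : lP b \o (\pi_(Sq g))%qT = piY \o existT (cfam (XX X)) b.
    by apply/funext => u /=; exact: lP_pi.
  apply: comp_cont; first exact: existT_continuous.
  exact: piQ_continuous.
by move=> a a'; rewrite /lP dP_pi /dY /dYb /= eqxx.
Qed.

Lemma lP_comm : lP false \o q g true = lP true \o q g false.
Proof.
apply/funext => x /=; rewrite /q !lP_pi; apply/piY_eqP; rewrite /dY /dYb /=.
split; apply/le_anti; rewrite cr_ge0 andbT.
  by apply: le_trans (xinf_le _ _ _ x) _; rewrite /= !g_00 adde0.
by apply: le_trans (xinf_le _ _ _ x) _; rewrite /= !g_00 adde0.
Qed.

Lemma PP_univ (Q : metCH R) (m0 m1 : Sq g -> Q) :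
  is_hom (@dS R X g) (@mcd R Q) m0 -> is_hom (@dS R X g) (@mcd R Q) m1 ->
  m0 \o q g true = m1 \o q g false ->
  exists! k : PP -> Q, [/\ is_hom (@mcd R PP) (@mcd R Q) k, k \o lP false = m0 & k \o lP true = m1].
Proof.
move=> [cm0 hm0] [cm1 hm1] comm.
have dQ_tri : forall a b c : Q, mcd a c <= mcd a b + mcd b c.
  by have [_ _ h] := mc_metric Q.
have dQ_ge0 : forall a b : Q, 0 <= mcd a b.
  by have [h _ _] := mc_metric Q.
have comm' : forall z, m0 (q g true z) = m1 (q g false z).
  by move=> z; have := congr1 (fun f => f z) comm.
pose h := unstable.sigT_fun (fun b (y : cfam (XX X) b) =>
   (if b then m1 else m0) (piS g y)).
have hne : forall p p', mcd (h p) (h p') <= dY p p'.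
  move=> [[|] u] [[|] v]; rewrite /h /unstable.sigT_fun /dY /dYb /=.
  - by have := hm1 (piS g u) (piS g v); rewrite dS_pi.
  - apply/ereal_infP => _ [z _ <-] /=.
    apply: le_trans (dQ_tri _ (m1 (q g false z)) _) _.
    apply: leeD; first by have := hm1 (piS g u) (q g false z); rewrite /q dS_pi.
    by rewrite -comm'; have := hm0 (q g true z) (piS g v); rewrite /q dS_pi.
  - apply/ereal_infP => _ [z _ <-] /=.
    apply: le_trans (dQ_tri _ (m0 (q g true z)) _) _.
    apply: leeD; first by have := hm0 (piS g u) (q g true z); rewrite /q dS_pi.
    by rewrite comm'; have := hm1 (q g false z) (piS g v); rewrite /q dS_pi.
  - by have := hm0 (piS g u) (piS g v); rewrite dS_pi.
have hhomo : forall p p', piY p = piY p' -> h p = h p'.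
  move=> p p' /piY_eqP [e1 e2]; apply: (mc_sep (m := Q)).
    by apply/le_anti; rewrite dQ_ge0 andbT -e1; exact: hne.
  by apply/le_anti; rewrite dQ_ge0 andbT -e2; exact: hne.
have hcont : continuous h.
  apply: sigT_continuous => b; case: b => /=.
    by apply: comp_cont; [exact: pi_continuous | exact: cm1].
  by apply: comp_cont; [exact: pi_continuous | exact: cm0].
have hrepr : forall p, h (repr (piY p)) = h p.
  by move=> p; apply: hhomo; rewrite /piY piQ_repr.
have kE : forall b a, (h \o repr) (lP b a) = (if b then m1 else m0) a.
  move=> b a; rewrite /= /lP hrepr /h /unstable.sigT_fun /=.
  by rewrite /piS reprK.
exists (h \o repr : PP -> Q); split.
  split.
  - split.
      apply: repr_comp_continuous => // u v /eqP e; apply/eqP.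
      by apply: hhomo; exact: e.
    by move=> a b; exact: hne.
  - by apply/funext => a; have := kE false a.
  - by apply/funext => a; have := kE true a.
move=> k' [_ e0 e1]; apply/funext => a.
rewrite -(piQ_repr R YY dY dY_metric a).
case: (repr a) => b w.
have -> : piQ R YY dY dY_metric (existT (cfam (XX X)) b w) = lP b (piS g w).
  by rewrite lP_pi.
rewrite kE; case: b w => w.
  by rewrite -e1.
by rewrite -e0.
Qed.

Lemma transitive_formula : transitive_sub g ->
  forall (x y : X) (i : bool),
     g (cinj i x) (cinj (~~ i) y) =
     ereal_inf ((fun z : X => g (cinj i x) (cinj (~~ i) z) + g (cinj i z) (cinj (~~ i) y)) @` [set: X]).
Proof.
move=> T x y i.
have pu : is_pushout (@mcd R X) (@dS R X g) (q g true) (q g false) (lP false) (lP true).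
  split; [exact: lP_hom | exact: lP_hom | exact: lP_comm | exact: PP_univ].
have [t [[_ tne] t0 t1]] := T PP (lP false) (lP true) pu.
apply/le_anti/andP; split.
  apply/ereal_infP => _ [z _ <-] /=.
  apply: le_trans (g_tri R X g _ (cinj (~~ i) z) _) _.
  apply: leeD => //.
  apply: le_trans (g_below_same R X g _ z y) _; exact: refl_le.
have tq : forall b x, t (q g b x) = lP b (q g b x).
  by case=> z; [have := congr1 (fun f => f z) t1 | have := congr1 (fun f => f z) t0].
have := tne (q g i x) (q g (~~ i) y).
rewrite !tq /q !lP_pi dP_pi dS_pi /dY /dYb /=.
by case: i.
Qed.

End Push.

Theorem lemma5p7' (R : realType) (X : metCH R) (g : bsubmetric X) :
  reflexive_sub g ->
  (transitive_sub g <->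
   forall (x y : X) (i : bool),
     g (cinj i x) (cinj (~~ i) y) =
     ereal_inf ((fun z : X => g (cinj i x) (cinj (~~ i) z) + g (cinj i z) (cinj (~~ i) y)) @` [set: X])).
Proof.
move=> rf; split.
  exact: transitive_formula.
exact: formula_transitive.
Qed.


Theorem lemma5p7 (R : realType) (X : metCH R) (g : bsubmetric X) :
  reflexive_sub g ->
  (transitive_sub g <->
   forall (x y : X) (i : bool),
     g (cinj i x) (cinj (~~ i) y) =
     ereal_inf ((fun z : X => g (cinj i x) (cinj (~~ i) z) + g (cinj i z) (cinj (~~ i) y)) @` [set: X])).
Proof. exact: lemma5p7'. Qed.
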